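(* Let $Q=\Diamond abcd$ be a convex quadrilateral with vertices $a,b,c,d$ in clockwise order, such that the diagonal $\overline{ac}$ is horizontal, $|ac|=1$, and $1$ is the diameter of $Q$. Let $\Box efgh$ be the smallest axis-parallel rectangle containing $Q$, with horizontal side length $1$ and vertical side length $W$, where $\frac{2}{\sqrt5}<W\le 1$; $a$ lies on its left side $\overline{gh}$, $b$ on its top side $\overline{he}$, $c$ on its right side $\overline{ef}$ and $d$ on its bottom side $\overline{fg}$. Assume that $\overline{ac}$ lies on or below the horizontal line through the midpoints of the left and right sides, and that $b$ lies to the right of the midpoint of the top side. Let $m_1$ be the midpoint of $\overline{ab}$ and let $z$ be the point where the perpendicular bisector of $\overline{ab}$, starting at $m_1$ and going into $Q$, meets the boundary of $Q$. If $z$ lies on the edge $\overline{cd}$, then $|m_1z|\ge \frac W2$. *)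

(* Defs.v *)
From mathcomp Require Import all_boot all_order all_algebra.
Set Implicit Arguments. Unset Strict Implicit. Unset Printing Implicit Defensive.
Import Order.TTheory GRing.Theory Num.Theory.
Local Open Scope ring_scope.

Definition pt (R : rcfType) := (R * R)%type.

Definition px {R : rcfType} (p : pt R) : R := p.1.
Definition py {R : rcfType} (p : pt R) : R := p.2.

Definition dist {R : rcfType} (p q : pt R) : R :=
  Num.sqrt ((px p - px q) ^+ 2 + (py p - py q) ^+ 2).

(* cross product of (q - p) and (r - q): negative iff p -> q -> r turns right
   (clockwise). *)
Definition turn {R : rcfType} (p q r : pt R) : R :=
  (px q - px p) * (py r - py q) - (py q - py p) * (px r - px q).

Definition convex_quad_cw {R : rcfType} (a b c d : pt R) : Prop :=
  [/\ turn a b c < 0, turn b c d < 0, turn c d a < 0 & turn d a b < 0].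

Definition in_quad {R : rcfType} (a b c d p : pt R) : Prop :=
  exists la lb lc ld : R,
    [/\ 0 <= la, 0 <= lb, 0 <= lc & 0 <= ld] /\
    [/\ la + lb + lc + ld = 1,
        px p = la * px a + lb * px b + lc * px c + ld * px d
      & py p = la * py a + lb * py b + lc * py c + ld * py d].

Definition diameter_is {R : rcfType} (a b c d : pt R) (D : R) : Prop :=
  (forall p q, in_quad a b c d p -> in_quad a b c d q -> dist p q <= D) /\
  (exists p q, [/\ in_quad a b c d p, in_quad a b c d q & dist p q = D]).

Definition on_segment {R : rcfType} (u v p : pt R) : Prop :=
  exists t : R, [/\ 0 <= t, t <= 1,
    px p = px u + t * (px v - px u) & py p = py u + t * (py v - py u)].

Definition midpoint {R : rcfType} (p q : pt R) : pt R :=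
  ((px p + px q) / 2, (py p + py q) / 2).

(* Main.v *)
Require Import Defs.
From mathcomp Require Import all_boot all_order all_algebra.
From mathcomp Require Import ring lra.
Import Order.TTheory GRing.Theory Num.Theory.
Local Open Scope ring_scope.

Lemma keyA (R : rcfType) (h W p q : R) :
  0 <= h -> 2 * h <= W -> W <= 1 -> p <= 1 -> 0 <= q -> q <= 1 ->
  (p - q)^+2 + W^+2 <= 1 -> 4/5 < W^+2 ->
  0 <= h * (1-p+q)^+2 + 2 * (1-p+q) * (1-q) * W - W^+2 * h.
Proof.
move=> h0 hW W1 p1 q0 q1 hd W45.
set k := 1 - p + q. set s := 1 - q.
have k13 : 1/3 < k.
  rewrite /k; case: (lerP (2/3) (p - q)) => H; last lra.
  have : 4/9 <= (p-q)^+2 by nra.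
  nra.
have s0 : 0 <= s by rewrite /s; lra.
have W0 : 0 <= W by lra.
case: (lerP W k) => Hk.
  have : W^+2 <= k^+2 by nra.
  move=> ?. have : 0 <= k * s * W by apply: mulr_ge0; [apply: mulr_ge0|]; lra.
  nra.
have sk : 1 - k <= s by rewrite /s /k; lra.
have : 0 <= k * (s - (1 - k)) by apply: mulr_ge0; lra.
have : 0 <= (3*k - 1) * (1 - k) by apply: mulr_ge0; lra.
have : 1 <= k^+2 + 4 * k * s by nra.
move=> H1.
have : 2 * k * s * W >= 4 * k * s * h.
  have : 0 <= k * s by apply: mulr_ge0; lra.
  nra.
move=> H2.
have : 0 <= h * (k^+2 + 4 * k * s - 1) by apply: mulr_ge0; lra.
have : 0 <= h * (1 - W^+2) by apply: mulr_ge0; nra.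
nra.
Qed.

Lemma keyB (R : rcfType) (h W p q t : R) :
  0 <= h -> 2 * h <= W -> W <= 1 -> p <= 1 -> 0 <= q -> q <= 1 ->
  (p - q)^+2 + W^+2 <= 1 -> 4/5 < W^+2 -> 0 < (1-q)^+2 + h^+2 ->
  W^+2 / 4 <= (p/2 - 1 - t*(q-1))^+2 + ((W-h)/2 + t*h)^+2.
Proof.
move=> h0 hW W1 p1 q0 q1 hd W45 V0.
have A := @keyA R h W p q h0 hW W1 p1 q0 q1 hd W45.
set V := (1-q)^+2 + h^+2 in V0 *.
set D := (p/2 - 1 - t*(q-1))^+2 + ((W-h)/2 + t*h)^+2.
set N := (1-q) * W + h * (1 - p + q).
have E1 : V * D = (N/2)^+2 + ((1-q)*(p/2 - 1 - t*(q-1)) + h*((W-h)/2 + t*h))^+2.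
  by rewrite /V /D /N; field.
have E2 : N^+2 - W^+2 * V = h * (h * (1-p+q)^+2 + 2 * (1-p+q) * (1-q) * W - W^+2 * h).
  rewrite /N /V; ring.
have : 0 <= h * (h * (1-p+q)^+2 + 2 * (1-p+q) * (1-q) * W - W^+2 * h) by apply: mulr_ge0.
move=> H.
have : (N/2)^+2 <= V * D.
  rewrite E1 lerDl; exact: sqr_ge0.
have : (N/2)^+2 = N^+2/4 by field; done.
have : W^+2 * V <= N^+2 by lra.
move=> h1 h2 h3.
have : V * (W^+2/4) = (W^+2 * V)/4 by field; done.
move=> h4.
have : V * (W^+2/4) <= V * D by rewrite h4; lra.
by rewrite ler_pM2l.
Qed.

Theorem lemma6 (R : rcfType) (a b c d : pt R) (x0 y0 W : R) :
  convex_quad_cw a b c d ->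
  py a = py c ->
  dist a c = 1 ->
  diameter_is a b c d 1 ->
  2 / Num.sqrt 5 < W -> W <= 1 ->
  (* a on left side gh, b on top side he, c on right side ef, d on bottom fg *)
  px a = x0 -> y0 <= py a <= y0 + W ->
  py b = y0 + W -> x0 <= px b <= x0 + 1 ->
  px c = x0 + 1 -> y0 <= py c <= y0 + W ->
  py d = y0 -> x0 <= px d <= x0 + 1 ->
  (* ac on or below the line through the midpoints of the left/right sides *)
  py a <= y0 + W / 2 ->
  (* b to the right of the midpoint of the top side *)
  x0 + 1 / 2 < px b ->
  forall z : pt R,
    (exists t : R, 0 < t /\
       z = (px (midpoint a b) + t * (py b - py a),
            py (midpoint a b) - t * (px b - px a))) ->
    on_segment c d z ->
    W / 2 <= dist (midpoint a b) z.
Proof.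
Proof.
case: a => ax ay; case: b => bx by_; case: c => cx cy; case: d => dx dy.
rewrite /px /py /=.
move=> [_ Htbcd _ _] Hac _ [Hdiam _] HW W1 Hax /andP[Ha1 Ha2] Hby /andP[Hb1 Hb2]
  Hcx /andP[Hc1 Hc2] Hdy /andP[Hd1 Hd2] Hamid Hbmid [zx zy] _ [t [t0 t1 Hzx Hzy]].
move: Htbcd; rewrite /turn /px /py /= => Htbcd.
move: Hzx Hzy; rewrite /px /py /= => Hzx Hzy.
have Hbd : dist (bx, by_) (dx, dy) <= 1.
  apply: Hdiam.
  - exists 0, 1, 0, 0; split; [split; lra| split; rewrite /px /py /=; ring].
  - exists 0, 0, 0, 1; split; [split; lra| split; rewrite /px /py /=; ring].
move: Hbd; rewrite /dist /px /py /= => Hbd.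
have Hbd2 : (bx - dx)^+2 + (by_ - dy)^+2 <= 1.
  have Hs := sqrtr_ge0 ((bx - dx)^+2 + (by_ - dy)^+2).
  have Hq := sqr_sqrtr (addr_ge0 (sqr_ge0 (bx - dx)) (sqr_ge0 (by_ - dy))).
  nra.
have H5 : 0 < Num.sqrt (5:R) by rewrite sqrtr_gt0; lra.
have H55 : Num.sqrt (5:R) ^+ 2 = 5 by rewrite sqr_sqrtr //; lra.
have W45 : 4/5 < W^+2.
  have : 2 < W * Num.sqrt 5.
    by move: HW; rewrite ltr_pdivrMr.
  nra.
have V0 : 0 < (1 - (dx - x0))^+2 + (ay - y0)^+2.
  case: (lerP ((1 - (dx - x0))^+2 + (ay - y0)^+2) 0) => // HV.
  have E : (cx - dx)^+2 + (cy - dy)^+2 = (1 - (dx - x0))^+2 + (ay - y0)^+2.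
    by rewrite Hcx -Hac Hdy; ring.
  have Lg : ((cx - bx)^+2 + (cy - by_)^+2) * ((dx - cx)^+2 + (dy - cy)^+2) =
    ((cx - bx) * (dy - cy) - (cy - by_) * (dx - cx))^+2
    + ((cx - bx) * (dx - cx) + (cy - by_) * (dy - cy))^+2 by ring.
  have : (dx - cx)^+2 + (dy - cy)^+2 <= 0.
    have -> : (dx - cx)^+2 + (dy - cy)^+2 = (cx - dx)^+2 + (cy - dy)^+2 by ring.
    by rewrite E.
  move=> H0.
  have : 0 <= (cx - bx)^+2 + (cy - by_)^+2 by apply: addr_ge0; apply: sqr_ge0.
  have : 0 <= ((cx - bx) * (dx - cx) + (cy - by_) * (dy - cy))^+2 by apply: sqr_ge0.
  nra.
have Hhd : (bx - x0 - (dx - x0))^+2 + W^+2 <= 1.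
  have -> : bx - x0 - (dx - x0) = bx - dx by ring.
  have -> : W = by_ - dy by rewrite Hby Hdy; ring.
  exact: Hbd2.
have K := @keyB R (ay - y0) W (bx - x0) (dx - x0) t
  ltac:(lra) ltac:(lra) W1 ltac:(lra) ltac:(lra) ltac:(lra)
  Hhd W45 V0.
rewrite /dist /midpoint /px /py /=.
have -> : W / 2 = Num.sqrt ((W/2)^+2) by rewrite sqrtr_sqr ger0_norm //; lra.
rewrite ler_sqrt; last by apply: addr_ge0; apply: sqr_ge0.
have -> : (W / 2) ^+ 2 = W^+2/4 by field; done.
have -> : (ax + bx) / 2 - zx = (bx - x0) / 2 - 1 - t * ((dx - x0) - 1).
  rewrite Hzx Hcx Hax; field; done.
have -> : (ay + by_) / 2 - zy = (W - (ay - y0)) / 2 + t * (ay - y0).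
  rewrite Hzy Hby Hdy -Hac; field; done.
exact: K.
Qed.
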